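(* Let $\gamma:S^n\to\mathbb{R}_+$ be continuous and set $\widetilde W=\alpha_N^{-1}\circ Id(\mathcal{W}_\gamma)\subset S^{n+1}$. Then $\widetilde W=\widetilde W^{\circ}$ if and only if $\widetilde W$ is of constant width $\pi/2$.
   Context: $\mathcal{W}_\gamma=\bigcap_{\theta\in S^n}\{x\in\mathbb{R}^{n+1}: x\cdot\theta\le\gamma(\theta)\}$ is the Wulff shape of $\gamma$. $N=(0,\dots,0,1)\in S^{n+1}$, $Id(x)=(x,1)$, and $\alpha_N(P_1,\dots,P_{n+2})=(P_1/P_{n+2},\dots,P_{n+1}/P_{n+2},1)$ on $\{P\in S^{n+1}:P_{n+2}>0\}$ (central projection). For $P\in S^{n+1}$, $H(P)=\{Q\in S^{n+1}:P\cdot Q\ge0\}$. The spherical polar set of $\widetilde W\subset S^{n+1}$ is $\widetilde W^\circ=\bigcap_{P\in\widetilde W}H(P)$. $|PQ|=\arccos(P\cdot Q)$. $H(P)$ supports a spherical convex body $\widetilde W$ if $\widetilde W\subset H(P)$ and $\partial\widetilde W\cap\partial H(P)\ne\emptyset$. The lune $H(P)\cap H(Q)$ ($P\ne\pm Q$) has thickness $\pi-|PQ|$. For $H(P)$ supporting $\widetilde W$, $\mathrm{width}_{H(P)}\widetilde W$ is the minimum thickness of lunes $H(P)\cap H(Q)\supset\widetilde W$ with $H(Q)$ supporting $\widetilde W$; $\widetilde W$ is of constant width $\rho$ if this equals $\rho$ for every supporting hemisphere $H(P)$. *)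

(* Defs.v *)
From Stdlib Require Import Reals Lra.
Open Scope R_scope.

(* Points of R^k are represented by functions nat -> R of which only the
   coordinates 0 .. k-1 are used.  Coordinate i (0-based) corresponds to the
   paper's coordinate i+1.  All predicates below depend only on the first
   k coordinates. *)

Fixpoint sumR (k : nat) (f : nat -> R) : R :=
  match k with
  | O => 0
  | S k' => sumR k' f + f k'
  end.

Definition dot (k : nat) (x y : nat -> R) : R := sumR k (fun i => x i * y i).

Definition dist (k : nat) (x y : nat -> R) : R :=
  sqrt (sumR k (fun i => (x i - y i) * (x i - y i))).

(* Unit sphere S^(k-1) in R^k *)
Definition sphere (k : nat) (x : nat -> R) : Prop := dot k x x = 1.

Definition veq (k : nat) (x y : nat -> R) : Prop := forall i, (i < k)%nat -> x i = y i.

Definition vopp (x : nat -> R) : nat -> R := fun i => - x i.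

Definition continuous_on_sphere (n : nat) (gamma : (nat -> R) -> R) : Prop :=
  forall th, sphere (S n) th ->
  forall eps, 0 < eps -> exists delta, 0 < delta /\
    forall th', sphere (S n) th' -> dist (S n) th th' < delta ->
      Rabs (gamma th - gamma th') < eps.

Definition wulff (n : nat) (gamma : (nat -> R) -> R) (x : nat -> R) : Prop :=
  forall th, sphere (S n) th -> dot (S n) x th <= gamma th.

(* Central projection alpha_N on the open hemisphere {P_{n+2} > 0} of S^(n+1)
   (last coordinate has 0-based index n+1), and Id(x) = (x,1). *)
Definition alphaN (n : nat) (P : nat -> R) : nat -> R :=
  fun i => if Nat.ltb i (S n) then P i / P (S n) else 1.

Definition Id_emb (n : nat) (x : nat -> R) : nat -> R :=
  fun i => if Nat.ltb i (S n) then x i else 1.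

(* alpha_N^{-1}(Id(A)) for A subset R^(n+1): points P of S^(n+1) with P_{n+2} > 0
   whose central projection equals Id(x) for some x in A *)
Definition tilde (n : nat) (A : (nat -> R) -> Prop) (P : nat -> R) : Prop :=
  sphere (S (S n)) P /\ 0 < P (S n) /\
  exists x, A x /\ veq (S (S n)) (alphaN n P) (Id_emb n x).

Definition hemi (k : nat) (P Q : nat -> R) : Prop := sphere k Q /\ 0 <= dot k P Q.

Definition polar (k : nat) (W : (nat -> R) -> Prop) (Q : nat -> R) : Prop :=
  sphere k Q /\ forall P, W P -> 0 <= dot k P Q.

Definition sboundary (k : nat) (W : (nat -> R) -> Prop) (x : nat -> R) : Prop :=
  sphere k x /\
  forall eps, 0 < eps ->
    (exists y, sphere k y /\ W y /\ dist k x y < eps) /\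
    (exists z, sphere k z /\ ~ W z /\ dist k x z < eps).

Definition hemi_boundary (k : nat) (P Q : nat -> R) : Prop :=
  sphere k Q /\ dot k P Q = 0.

Definition supports (k : nat) (W : (nat -> R) -> Prop) (P : nat -> R) : Prop :=
  (forall Q, W Q -> hemi k P Q) /\
  exists Q, sboundary k W Q /\ hemi_boundary k P Q.

Definition sdist (k : nat) (P Q : nat -> R) : R := acos (dot k P Q).

Definition lune_thickness (k : nat) (P Q : nat -> R) : R := PI - sdist k P Q.

Definition width_lune (k : nat) (W : (nat -> R) -> Prop) (P Q : nat -> R) : Prop :=
  sphere k Q /\ ~ veq k P Q /\ ~ veq k P (vopp Q) /\
  supports k W Q /\
  (forall R0, W R0 -> hemi k P R0 /\ hemi k Q R0).

Definition width_is (k : nat) (W : (nat -> R) -> Prop) (P : nat -> R) (rho : R) : Prop :=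
  (exists Q, width_lune k W P Q /\ lune_thickness k P Q = rho) /\
  (forall Q, width_lune k W P Q -> rho <= lune_thickness k P Q).

Definition constant_width (k : nat) (W : (nat -> R) -> Prop) (rho : R) : Prop :=
  forall P, sphere k P -> supports k W P -> width_is k W P rho.

(* Main.v *)
Require Import Defs.
From Stdlib Require Import Reals Lra Lia Rtopology ClassicalEpsilon Classical.
Open Scope R_scope.

Lemma sumR_ext k f g : (forall i, (i < k)%nat -> f i = g i) -> sumR k f = sumR k g.
Proof. induction k; simpl; intros H; auto. rewrite IHk by (intros; apply H; lia). rewrite (H k) by lia; auto. Qed.

Lemma sumR_plus k f g : sumR k (fun i => f i + g i) = sumR k f + sumR k g.
Proof. induction k; simpl; [lra|]. rewrite IHk; lra. Qed.

Lemma sumR_scal k c f : sumR k (fun i => c * f i) = c * sumR k f.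
Proof. induction k; simpl; [lra|]. rewrite IHk; lra. Qed.

Lemma sumR_le k f g : (forall i, (i < k)%nat -> f i <= g i) -> sumR k f <= sumR k g.
Proof. induction k; simpl; intros H; [lra|]. pose proof (H k ltac:(lia)). pose proof (IHk ltac:(intros; apply H; lia)). lra. Qed.

Lemma sumR_nonneg k f : (forall i, (i < k)%nat -> 0 <= f i) -> 0 <= sumR k f.
Proof. intros H. replace 0 with (sumR k (fun _ => 0)). apply sumR_le; auto. induction k; simpl; auto. rewrite IHk; [lra|]. intros; apply H; lia. Qed.

Lemma sumR_term k f i : (forall i, (i < k)%nat -> 0 <= f i) -> (i < k)%nat -> f i <= sumR k f.
Proof. induction k; simpl; intros H Hi; [lia|].
  destruct (Nat.eq_dec i k). subst. pose proof (sumR_nonneg k f ltac:(intros; apply H; lia)). lra.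
  pose proof (IHk ltac:(intros; apply H; lia) ltac:(lia)). pose proof (H k ltac:(lia)). lra. Qed.

Lemma sumR_zero k : sumR k (fun _ => 0) = 0.
Proof. induction k; simpl; auto. rewrite IHk; lra. Qed.

Lemma dot_sym k a b : dot k a b = dot k b a.
Proof. unfold dot. apply sumR_ext. intros; ring. Qed.

Lemma dot_lc k z a x b y : dot k z (fun i => a * x i + b * y i) = a * dot k z x + b * dot k z y.
Proof. unfold dot. rewrite <- !sumR_scal, <- sumR_plus. apply sumR_ext; intros; ring. Qed.

Lemma dot_scal k z c x : dot k z (fun i => c * x i) = c * dot k z x.
Proof. unfold dot. rewrite <- sumR_scal. apply sumR_ext; intros; ring. Qed.

Lemma dot_ext k z x y : veq k x y -> dot k z x = dot k z y.
Proof. intros H. unfold dot. apply sumR_ext; intros. rewrite H; auto. Qed.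

Lemma dot_self_nonneg k a : 0 <= dot k a a.
Proof. unfold dot. apply sumR_nonneg. intros. nra. Qed.

Lemma dot_wcs k a b t : 0 < t -> 2 * Rabs (dot k a b) <= t * dot k a a + dot k b b / t.
Proof. intros Ht.
  assert (H1 : 0 <= sumR k (fun i => (t * a i + b i) * (t * a i + b i)) / t).
  { apply Rle_mult_inv_pos; [apply sumR_nonneg; intros i _; apply Rle_0_sqr | lra]. }
  assert (H2 : 0 <= sumR k (fun i => (t * a i - b i) * (t * a i - b i)) / t).
  { apply Rle_mult_inv_pos; [apply sumR_nonneg; intros i _; apply Rle_0_sqr | lra]. }
  assert (L3: forall p q r, sumR k (fun i => p * (a i * a i) + q * (a i * b i) + r * (b i * b i)) = p * dot k a a + q * dot k a b + r * dot k b b).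
  { intros. unfold dot. rewrite !sumR_plus, !sumR_scal. ring. }
  replace (sumR k (fun i => (t * a i + b i) * (t * a i + b i)))
    with (t*t * dot k a a + 2 * t * dot k a b + 1 * dot k b b) in H1
    by (rewrite <- L3; apply sumR_ext; intros; ring).
  replace (sumR k (fun i => (t * a i - b i) * (t * a i - b i)))
    with (t*t * dot k a a + (- (2 * t)) * dot k a b + 1 * dot k b b) in H2
    by (rewrite <- L3; apply sumR_ext; intros; ring).
  unfold Rdiv in *. 
  assert (E1: (t * t * dot k a a + 2 * t * dot k a b + 1 * dot k b b) * / t = t * dot k a a + 2 * dot k a b + dot k b b * / t) by (field; lra).
  assert (E2: (t * t * dot k a a + - (2 * t) * dot k a b + 1 * dot k b b) * / t = t * dot k a a - 2 * dot k a b + dot k b b * / t) by (field; lra).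
  rewrite E1 in H1; rewrite E2 in H2.
  unfold Rabs; destruct Rcase_abs; lra. Qed.

Lemma dot_cs k a b : 2 * Rabs (dot k a b) <= dot k a a + dot k b b.
Proof. pose proof (dot_wcs k a b 1 ltac:(lra)). unfold Rdiv in H. rewrite Rinv_1 in H. lra. Qed.

Lemma dot_unit_bound k a b : dot k a a = 1 -> dot k b b = 1 -> -1 <= dot k a b <= 1.
Proof. intros. pose proof (dot_cs k a b). unfold Rabs in H1; destruct Rcase_abs in H1; lra. Qed.

Definition incr (phi : nat -> nat) := forall j, (phi j < phi (S j))%nat.

Lemma incr_ge phi : incr phi -> forall j, (j <= phi j)%nat.
Proof. intros H j; induction j; [lia|]. specialize (H j); lia. Qed.

Lemma incr_lt phi : incr phi -> forall a b, (a < b)%nat -> (phi a < phi b)%nat.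
Proof. intros H a b Hab. induction b; [lia|]. destruct (Nat.eq_dec a b). subst; apply H.
  specialize (H b). specialize (IHb ltac:(lia)). lia. Qed.

Lemma incr_comp phi psi : incr phi -> incr psi -> incr (fun j => phi (psi j)).
Proof. intros H1 H2 j. apply incr_lt; auto. Qed.

Lemma cv_sub u l phi : Un_cv u l -> incr phi -> Un_cv (fun j => u (phi j)) l.
Proof. intros H Hp eps He. destruct (H eps He) as [N HN]. exists N. intros n Hn.
  apply HN. pose proof (incr_ge phi Hp n). lia. Qed.

Lemma inv_small eps : 0 < eps -> exists N : nat, forall j, (j >= N)%nat -> / INR (S j) < eps.
Proof. intros He. destruct (archimed_cor1 eps He) as [N [H1 H2]]. exists N. intros j Hj.
  apply Rle_lt_trans with (/ INR N); auto. apply Rinv_le_contravar. apply lt_0_INR; auto.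
  apply le_INR; lia. Qed.

Fixpoint build (pick : nat -> nat -> nat) (j : nat) : nat :=
  match j with O => pick O O | S j' => pick (S (build pick j')) j end.

Lemma BW1 (u : nat -> R) : (forall j, Rabs (u j) <= 1) ->
  exists phi l, incr phi /\ Un_cv (fun j => u (phi j)) l.
Proof. intros Hb.
  destruct (Bolzano_Weierstrass u (fun c => -1 <= c <= 1) (compact_P3 (-1) 1)) as [l Hl].
  { intros n; specialize (Hb n); unfold Rabs in Hb; destruct Rcase_abs in Hb; lra. }
  assert (Hp : forall N j : nat, exists p, (N <= p)%nat /\ Rabs (u p - l) < / INR (S j)).
  { intros N j. assert (Hpos : 0 < / INR (S j)) by (apply Rinv_0_lt_compat, lt_0_INR; lia).
    destruct (Hl (disc l (mkposreal _ Hpos)) N) as [p Hp].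
    { exists (mkposreal _ Hpos). intros x Hx; exact Hx. }
    exists p; exact Hp. }
  set (pick := fun N j => proj1_sig (constructive_indefinite_description _ (Hp N j))).
  assert (Hpick : forall N j, (N <= pick N j)%nat /\ Rabs (u (pick N j) - l) < / INR (S j)).
  { intros; unfold pick; destruct constructive_indefinite_description; simpl; auto. }
  exists (build pick), l. split.
  - intros j. simpl. destruct (Hpick (S (build pick j)) (S j)). lia.
  - intros eps He. destruct (inv_small eps He) as [N HN]. exists N. intros j Hj.
    unfold Rdist. apply Rlt_trans with (/ INR (S j)); [|apply HN; auto].
    destruct j; simpl; apply Hpick.
Qed.

Lemma BWk k (u : nat -> nat -> R) : (forall j i, (i < k)%nat -> Rabs (u j i) <= 1) ->
  exists phi L, incr phi /\ forall i, (i < k)%nat -> Un_cv (fun j => u (phi j) i) (L i).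
Proof. induction k; intros Hb.
  - exists (fun j => j), (fun _ => 0). split; [intros j; lia|]. intros; lia.
  - destruct IHk as [phi [L [Hp HL]]]. { intros; apply Hb; lia. }
    destruct (BW1 (fun j => u (phi j) k)) as [psi [l [Hpsi Hl]]]. { intros; apply Hb; lia. }
    exists (fun j => phi (psi j)), (fun i => if Nat.eqb i k then l else L i). split.
    + apply incr_comp; auto.
    + intros i Hi. destruct (Nat.eqb_spec i k).
      * subst. exact Hl.
      * apply (cv_sub (fun j => u (phi j) i)); auto. apply HL; lia.
Qed.

Lemma cv_const c : Un_cv (fun _ => c) c.
Proof. intros e He; exists O; intros; unfold Rdist; rewrite Rminus_diag, Rabs_R0; auto. Qed.

Lemma cv_le u l a : Un_cv u l -> (forall j, u j <= a) -> l <= a.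
Proof. intros H Ha. destruct (Rle_or_lt l a); auto.
  destruct (H (l - a) ltac:(lra)) as [N HN]. specialize (HN N ltac:(lia)). specialize (Ha N).
  unfold Rdist, Rabs in HN; destruct Rcase_abs in HN; lra. Qed.

Lemma cv_ge u l a : Un_cv u l -> (forall j, a <= u j) -> a <= l.
Proof. intros H Ha. destruct (Rle_or_lt a l); auto.
  destruct (H (a - l) ltac:(lra)) as [N HN]. specialize (HN N ltac:(lia)). specialize (Ha N).
  unfold Rdist, Rabs in HN; destruct Rcase_abs in HN; lra. Qed.

Lemma cv_le_inv u l : Un_cv u l -> (forall j, u j <= / INR (S j)) -> l <= 0.
Proof. intros H Ha. destruct (Rle_or_lt l 0); auto.
  destruct (H (l/2) ltac:(lra)) as [N1 HN1]. destruct (inv_small (l/2) ltac:(lra)) as [N2 HN2].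
  specialize (HN1 (max N1 N2) ltac:(lia)). specialize (HN2 (max N1 N2) ltac:(lia)). specialize (Ha (max N1 N2)).
  unfold Rdist, Rabs in HN1; destruct Rcase_abs in HN1; lra. Qed.

Lemma cv_dot k (u v : nat -> nat -> R) L M :
  (forall i, (i < k)%nat -> Un_cv (fun j => u j i) (L i)) ->
  (forall i, (i < k)%nat -> Un_cv (fun j => v j i) (M i)) ->
  Un_cv (fun j => dot k (u j) (v j)) (dot k L M).
Proof. induction k; intros Hu Hv.
  - unfold dot; simpl. apply cv_const.
  - unfold dot; simpl. apply CV_plus.
    + apply IHk; intros; [apply Hu|apply Hv]; lia.
    + apply CV_mult; [apply Hu|apply Hv]; lia. Qed.

Lemma dot_S n a b : dot (S n) a b = dot n a b + a n * b n.
Proof. reflexivity. Qed.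

Lemma coord_bound k a i : dot k a a = 1 -> (i < k)%nat -> Rabs (a i) <= 1.
Proof. intros H Hi. assert (a i * a i <= 1).
  { rewrite <- H. unfold dot. apply (sumR_term k (fun i => a i * a i)); auto. intros; nra. }
  unfold Rabs; destruct Rcase_abs; nra. Qed.

Lemma dot_div_l k x y c : dot k (fun i => x i / c) y = dot k x y / c.
Proof. unfold dot, Rdiv. rewrite Rmult_comm, <- sumR_scal. apply sumR_ext; intros; ring. Qed.

Lemma tilde_char n gamma P : tilde n (wulff n gamma) P <->
  sphere (S (S n)) P /\ 0 < P (S n) /\
  forall th, sphere (S n) th -> dot (S n) P th <= gamma th * P (S n).
Proof. split.
  - intros [Hs [Hp [x [Hw Hv]]]]. split; [|split]; auto. intros th Hth.
    specialize (Hw th Hth).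
    assert (E : dot (S n) x th = dot (S n) P th / P (S n)).
    { rewrite <- dot_div_l. unfold dot. apply sumR_ext. intros i Hi. f_equal.
      specialize (Hv i ltac:(lia)). unfold alphaN, Id_emb in Hv.
      assert (Nat.ltb i (S n) = true) as Hb by (apply Nat.ltb_lt; lia). rewrite Hb in Hv. auto. }
    rewrite E in Hw. unfold Rdiv in Hw.
    apply (Rmult_le_compat_r (P (S n))) in Hw; [|lra].
    rewrite Rmult_assoc, Rinv_l in Hw; lra.
  - intros [Hs [Hp Hc]]. split; [|split]; auto. exists (fun i => P i / P (S n)). split.
    + intros th Hth. rewrite dot_div_l. specialize (Hc th Hth).
      unfold Rdiv. apply (Rmult_le_reg_r (P (S n))); auto. rewrite Rmult_assoc, Rinv_l; lra.
    + intros i Hi. unfold alphaN, Id_emb. destruct (Nat.ltb i (S n)); auto.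
Qed.

Definition Nv (n : nat) : nat -> R := fun i => if Nat.eqb i (S n) then 1 else 0.

Lemma dot_Nv_r n k P : (k <= S n)%nat -> dot k P (Nv n) = 0.
Proof. induction k; intros Hk; [reflexivity|]. rewrite dot_S, IHk by lia. unfold Nv.
  destruct (Nat.eqb_spec k (S n)); [lia|]. ring. Qed.

Lemma dot_N n P : dot (S (S n)) P (Nv n) = P (S n).
Proof. rewrite dot_S, dot_Nv_r by lia. unfold Nv. rewrite Nat.eqb_refl. ring. Qed.

Lemma N_in n gamma : (forall th, sphere (S n) th -> 0 < gamma th) -> tilde n (wulff n gamma) (Nv n).
Proof. intros hpos. apply tilde_char. split; [|split].
  - unfold sphere. rewrite dot_N. unfold Nv. rewrite Nat.eqb_refl; auto.
  - unfold Nv. rewrite Nat.eqb_refl; lra.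
  - intros th Hth. rewrite (dot_sym (S n) (Nv n) th), dot_Nv_r by lia. unfold Nv. rewrite Nat.eqb_refl.
    specialize (hpos th Hth); lra.
Qed.

Definition normz (k : nat) (V : nat -> R) : nat -> R := fun i => / sqrt (dot k V V) * V i.

Lemma normz_dot_r k z V : dot k z (normz k V) = / sqrt (dot k V V) * dot k z V.
Proof. apply dot_scal. Qed.

Lemma normz_dot_l k z V : dot k (normz k V) z = / sqrt (dot k V V) * dot k V z.
Proof. rewrite (dot_sym k (normz k V) z), normz_dot_r, (dot_sym k z V); auto. Qed.

Lemma normz_sphere k V : 0 < dot k V V -> sphere k (normz k V).
Proof. intros H. unfold sphere. rewrite normz_dot_l, normz_dot_r.
  pose proof (sqrt_lt_R0 _ H). pose proof (sqrt_sqrt _ (Rlt_le _ _ H)).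
  rewrite <- H1 at 3. field. lra. Qed.

Lemma sqrt_pos_inv x : 0 < x -> 0 < / sqrt x.
Proof. intros; apply Rinv_0_lt_compat, sqrt_lt_R0; auto. Qed.

Lemma dot_last_pos n V : 0 < V (S n) -> 0 < dot (S (S n)) V V.
Proof. intros H. rewrite dot_S. pose proof (dot_self_nonneg (S n) V). nra. Qed.

Lemma cone_in n gamma V : 0 < V (S n) ->
  (forall th, sphere (S n) th -> dot (S n) V th <= gamma th * V (S n)) ->
  tilde n (wulff n gamma) (normz (S (S n)) V).
Proof. intros Hl Hc. pose proof (dot_last_pos n V Hl) as Hd.
  pose proof (sqrt_pos_inv _ Hd) as Hs. apply tilde_char. split; [|split].
  - apply normz_sphere; auto.
  - unfold normz. nra.
  - intros th Hth. rewrite (dot_sym (S n) (normz _ V) th). unfold normz. rewrite dot_scal, (dot_sym (S n) th V).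
    specialize (Hc th Hth). nra.
Qed.

Definition Kp n gamma V := forall P, tilde n (wulff n gamma) P -> 0 <= dot (S (S n)) P V.

Definition rho n (gamma : (nat -> R) -> R) th : nat -> R :=
  fun i => if Nat.eqb i (S n) then gamma th else - th i.

Lemma dot_agree k a b c : (forall i, (i < k)%nat -> b i = c i) -> dot k a b = dot k a c.
Proof. intros H; unfold dot; apply sumR_ext; intros; rewrite H; auto. Qed.

Lemma dot_rho n gamma th P : dot (S (S n)) P (rho n gamma th) = - dot (S n) P th + P (S n) * gamma th.
Proof. rewrite dot_S. unfold rho at 2. rewrite Nat.eqb_refl. f_equal.
  rewrite <- (Rmult_1_l (dot (S n) P th)), Ropp_mult_distr_l, <- dot_scal.
  apply dot_agree. intros i Hi. unfold rho. destruct (Nat.eqb_spec i (S n)); [lia|ring]. Qed.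

Lemma rho_in_K n gamma th : sphere (S n) th -> Kp n gamma (rho n gamma th).
Proof. intros Hth P HP. apply tilde_char in HP as [_ [_ Hc]]. rewrite dot_rho.
  specialize (Hc th Hth). nra. Qed.

Lemma inf_gamma n gamma : (forall th, sphere (S n) th -> 0 < gamma th) ->
  continuous_on_sphere n gamma -> exists m, 0 < m /\ forall th, sphere (S n) th -> m <= gamma th.
Proof. intros hpos hcont. apply NNPP. intros Hn.
  assert (Hs : forall j : nat, exists th, sphere (S n) th /\ gamma th < / INR (S j)).
  { intros j. apply NNPP; intros H2. apply Hn. exists (/ INR (S j)). split.
    apply Rinv_0_lt_compat, lt_0_INR; lia.
    intros th Hth. apply Rnot_lt_le. intros H3. apply H2. exists th; auto. }
  set (T := fun j => proj1_sig (constructive_indefinite_description _ (Hs j))).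
  assert (HT : forall j, sphere (S n) (T j) /\ gamma (T j) < / INR (S j)).
  { intros; unfold T; destruct constructive_indefinite_description; simpl; auto. }
  destruct (BWk (S n) T) as [phi [L [Hp HL]]].
  { intros j i Hi. apply (coord_bound (S n)); auto. apply HT. }
  assert (HsL : sphere (S n) L).
  { unfold sphere. pose proof (cv_dot (S n) (fun j => T (phi j)) (fun j => T (phi j)) L L HL HL) as Hc.
    apply Rle_antisym; [apply (cv_le _ _ 1 Hc)|apply (cv_ge _ _ 1 Hc)]; intros j; right; simpl; destruct (HT (phi j)) as [Hq _]; unfold sphere in Hq; lra. }
  pose proof (hpos L HsL) as HgL.
  destruct (hcont L HsL (gamma L / 2) ltac:(lra)) as [d [Hd Hcd]].
  set (D := fun j => fun i => L i - T (phi j) i).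
  assert (HD : Un_cv (fun j => dot (S n) (D j) (D j)) (dot (S n) (fun _ => 0) (fun _ => 0))).
  { apply cv_dot; intros i Hi; unfold D; replace 0 with (L i - L i) by ring;
    (apply CV_minus; [apply cv_const | apply HL; auto]). }
  replace (dot (S n) (fun _ => 0) (fun _ => 0)) with 0 in HD.
  2:{ unfold dot. rewrite (sumR_ext (S n) _ (fun _ => 0)) by (intros; ring). now rewrite sumR_zero. }
  destruct (HD (d * d) ltac:(nra)) as [N1 HN1].
  destruct (inv_small (gamma L / 2) ltac:(lra)) as [N2 HN2].
  set (j := max N1 N2).
  specialize (HN1 j ltac:(lia)). specialize (HN2 j ltac:(lia)).
  destruct (HT (phi j)) as [Hsj Hgj].
  assert (Hdist : Defs.dist (S n) L (T (phi j)) < d).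
  { unfold Defs.dist. rewrite <- (sqrt_square d) by lra. apply sqrt_lt_1_alt. split.
    apply (dot_self_nonneg (S n) (D j)).
    unfold Rdist in HN1. rewrite Rminus_0_r in HN1. unfold Rabs in HN1. destruct Rcase_abs in HN1.
    pose proof (dot_self_nonneg (S n) (D j)); lra. unfold D, dot in HN1. nra. }
  specialize (Hcd _ Hsj Hdist).
  assert (/ INR (S (phi j)) <= / INR (S j)).
  { apply Rinv_le_contravar. apply lt_0_INR; lia. apply le_INR. pose proof (incr_ge phi Hp j); lia. }
  unfold Rabs in Hcd; destruct Rcase_abs in Hcd; lra.
Qed.

Lemma Pos n gamma Q : (forall th, sphere (S n) th -> 0 < gamma th) ->
  continuous_on_sphere n gamma -> sphere (S (S n)) Q -> Kp n gamma Q -> 0 < Q (S n).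
Proof. intros hpos hcont HQ HK.
  pose proof (HK _ (N_in n gamma hpos)) as H0. rewrite dot_sym, dot_N in H0.
  destruct H0 as [H0|H0]; auto. exfalso.
  destruct (inf_gamma n gamma hpos hcont) as [m [Hm Hmg]].
  set (V := fun i => if Nat.eqb i (S n) then 1 else - m * Q i).
  assert (HV1 : V (S n) = 1) by (unfold V; rewrite Nat.eqb_refl; auto).
  assert (HVd : forall z, dot (S n) V z = - m * dot (S n) Q z).
  { intros z. rewrite (dot_sym _ V z), (dot_sym _ Q z), <- dot_scal. apply dot_agree.
    intros i Hi. unfold V. destruct (Nat.eqb_spec i (S n)); [lia|ring]. }
  assert (HQs : dot (S n) Q Q = 1).
  { unfold sphere in HQ. rewrite dot_S, <- H0 in HQ. lra. }
  assert (Hin : tilde n (wulff n gamma) (normz (S (S n)) V)).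
  { apply cone_in. lra. intros th Hth. rewrite HV1, HVd.
    pose proof (dot_unit_bound (S n) Q th HQs Hth). pose proof (Hmg th Hth). nra. }
  specialize (HK _ Hin). rewrite normz_dot_l, (dot_S (S n) V Q), HVd, HQs, <- H0 in HK.
  assert (0 < dot (S (S n)) V V) by (apply dot_last_pos; lra).
  pose proof (sqrt_pos_inv _ H). nra.
Qed.

Lemma closed_C n gamma (u : nat -> nat -> R) L :
  (forall j, tilde n (wulff n gamma) (u j)) ->
  (forall i, (i < S (S n))%nat -> Un_cv (fun j => u j i) (L i)) ->
  tilde n (wulff n gamma) L.
Proof. intros Hu HL.
  assert (HsL : sphere (S (S n)) L).
  { unfold sphere. pose proof (cv_dot _ u u L L HL HL) as Hc.
    apply Rle_antisym; [apply (cv_le _ _ 1 Hc)|apply (cv_ge _ _ 1 Hc)]; intros j; right;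
    destruct (proj1 (tilde_char _ _ _) (Hu j)) as [Hs _]; unfold sphere in Hs; lra. }
  assert (Hc : forall th, sphere (S n) th -> 0 <= dot (S (S n)) L (rho n gamma th)).
  { intros th Hth. apply (cv_ge (fun j => dot (S (S n)) (u j) (rho n gamma th))).
    apply (cv_dot _ u (fun _ => rho n gamma th)); auto. intros; apply cv_const.
    intros j. apply rho_in_K; auto. }
  assert (Hl0 : 0 <= L (S n)).
  { apply (cv_ge (fun j => u j (S n))). apply HL; lia. intros j.
    destruct (proj1 (tilde_char _ _ _) (Hu j)) as [_ [Hp _]]; left; apply Hp. }
  apply tilde_char. split; [|split]; auto.
  - destruct Hl0 as [Hl0|Hl0]; auto. exfalso.
    assert (HsL' : sphere (S n) L) by (unfold sphere in *; rewrite dot_S, <- Hl0 in HsL; lra).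
    specialize (Hc L HsL'). rewrite dot_rho, <- Hl0 in Hc. unfold sphere in HsL'. lra.
  - intros th Hth. specialize (Hc th Hth). rewrite dot_rho in Hc. lra.
Qed.

Lemma dot_lc2 k a x b y : dot k (fun i => a * x i + b * y i) (fun i => a * x i + b * y i)
  = a * a * dot k x x + 2 * a * b * dot k x y + b * b * dot k y y.
Proof. rewrite dot_lc. rewrite (dot_sym k _ x), (dot_sym k _ y), !dot_lc. rewrite (dot_sym k y x). ring. Qed.

Lemma dist_self k x : Defs.dist k x x = 0.
Proof. unfold Defs.dist. rewrite (sumR_ext k _ (fun _ => 0)) by (intros; ring). rewrite sumR_zero. apply sqrt_0. Qed.

Lemma nearrot k A B : dot k A A = 1 -> dot k B B = 1 -> dot k A B = 0 ->
  forall eps, 0 < eps -> exists z, sphere k z /\ dot k B z < 0 /\ Defs.dist k A z < eps.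
Proof. intros HA HB HAB eps He.
  set (d := Rmin (eps * eps / 4) (1/2)).
  assert (Hd1 : 0 < d) by (unfold d; apply Rmin_pos; nra).
  assert (Hd2 : d <= 1/2) by (unfold d; apply Rmin_r).
  assert (Hd3 : d <= eps * eps / 4) by (unfold d; apply Rmin_l).
  set (c := 1 - d). set (s := sqrt (1 - c * c)).
  assert (Hq : 0 < 1 - c * c) by (unfold c; nra).
  assert (Hs : 0 < s) by (apply sqrt_lt_R0; auto).
  assert (Hss : s * s = 1 - c * c) by (apply sqrt_sqrt; lra).
  exists (fun i => c * A i + (- s) * B i). split; [|split].
  - unfold sphere. rewrite dot_lc2, HA, HB, HAB. nra.
  - rewrite dot_lc, (dot_sym k B A), HAB, HB. nra.
  - unfold Defs.dist. rewrite <- (sqrt_square eps) by lra. apply sqrt_lt_1_alt. split.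
    + apply sumR_nonneg; intros i _; apply Rle_0_sqr.
    + rewrite (sumR_ext k _ (fun i => ((1 - c) * A i + s * B i) * ((1 - c) * A i + s * B i))) by (intros; ring).
      fold (dot k (fun i => (1 - c) * A i + s * B i) (fun i => (1 - c) * A i + s * B i)).
      rewrite dot_lc2, HA, HB, HAB. unfold c in *. nra.
Qed.

Lemma Supp n gamma V : 0 < dot (S (S n)) V V -> Kp n gamma V ->
  (forall eps, 0 < eps -> exists X, tilde n (wulff n gamma) X /\ dot (S (S n)) X V < eps) ->
  sphere (S (S n)) (normz (S (S n)) V) /\ Kp n gamma (normz (S (S n)) V) /\
  supports (S (S n)) (tilde n (wulff n gamma)) (normz (S (S n)) V).
Proof. intros HV HK Hinf. set (P := normz (S (S n)) V).
  pose proof (sqrt_pos_inv _ HV) as Hs. pose proof (sqrt_lt_R0 _ HV) as Hs'.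
  assert (HP : sphere (S (S n)) P) by (apply normz_sphere; auto).
  assert (HKP : Kp n gamma P).
  { intros X HX. unfold P. rewrite normz_dot_r. specialize (HK X HX). apply Rmult_le_pos; lra. }
  assert (Hseq : forall j : nat, exists X, tilde n (wulff n gamma) X /\ dot (S (S n)) X P < / INR (S j)).
  { intros j. assert (Hj : 0 < / INR (S j)) by (apply Rinv_0_lt_compat, lt_0_INR; lia).
    destruct (Hinf (/ INR (S j) * sqrt (dot (S (S n)) V V))) as [X [HX1 HX2]]. apply Rmult_lt_0_compat; auto.
    exists X. split; auto. unfold P. rewrite normz_dot_r.
    apply (Rmult_lt_compat_l (/ sqrt (dot (S (S n)) V V))) in HX2; auto.
    replace (/ sqrt (dot (S (S n)) V V) * (/ INR (S j) * sqrt (dot (S (S n)) V V))) with (/ INR (S j)) in HX2 by (assert (INR (S j) <> 0) by (apply not_0_INR; lia); field; lra).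
    exact HX2. }
  set (U := fun j => proj1_sig (constructive_indefinite_description _ (Hseq j))).
  assert (HU : forall j, tilde n (wulff n gamma) (U j) /\ dot (S (S n)) (U j) P < / INR (S j)).
  { intros; unfold U; destruct constructive_indefinite_description; simpl; auto. }
  destruct (BWk (S (S n)) U) as [phi [L [Hp HL]]].
  { intros j i Hi. apply (coord_bound (S (S n))); auto. destruct (HU j) as [H _].
    apply tilde_char in H. apply H. }
  assert (HLC : tilde n (wulff n gamma) L).
  { apply (closed_C n gamma (fun j => U (phi j))); auto. intros j; apply HU. }
  assert (HLs : sphere (S (S n)) L) by (apply tilde_char in HLC; apply HLC).
  assert (HLP : dot (S (S n)) L P = 0).
  { apply Rle_antisym.
    - apply (cv_le_inv (fun j => dot (S (S n)) (U (phi j)) P)).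
      + apply (cv_dot (S (S n)) (fun j => U (phi j)) (fun _ => P)); auto. intros; apply cv_const.
      + intros j. destruct (HU (phi j)) as [_ H]. left. apply Rlt_le_trans with (/ INR (S (phi j))); auto.
        apply Rinv_le_contravar. apply lt_0_INR; lia. apply le_INR. pose proof (incr_ge phi Hp j); lia.
    - apply HKP; auto. }
  split; [|split]; auto. split.
  - intros Q HQ. split. apply tilde_char in HQ; apply HQ. rewrite dot_sym. apply HKP; auto.
  - exists L. split.
    + split; auto. intros eps He. split.
      * exists L. split; auto. split; auto. rewrite dist_self; auto.
      * destruct (nearrot (S (S n)) L P HLs HP HLP eps He) as [z [Hz1 [Hz2 Hz3]]].
        exists z. split; auto. split; auto. intros Hz. specialize (HKP z Hz). rewrite dot_sym in HKP. lra.
    + split; auto. rewrite dot_sym; auto.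
Qed.

Definition lcv (A0 A1 : nat -> R) (s : R) : nat -> R := fun i => (1 - s) * A0 i + s * A1 i.

Lemma Exit n gamma A0 A1 : Kp n gamma A0 -> ~ Kp n gamma A1 ->
  exists s, 0 <= s < 1 /\ Kp n gamma (lcv A0 A1 s) /\
  (forall eps, 0 < eps -> exists X, tilde n (wulff n gamma) X /\ dot (S (S n)) X (lcv A0 A1 s) < eps).
Proof. intros H0 H1.
  set (E := fun s => 0 <= s <= 1 /\ Kp n gamma (lcv A0 A1 s)).
  assert (Hf : forall P s, dot (S (S n)) P (lcv A0 A1 s) = (1 - s) * dot (S (S n)) P A0 + s * dot (S (S n)) P A1).
  { intros; unfold lcv; apply dot_lc. }
  assert (HE0 : E 0).
  { split; [lra|]. intros P HP. rewrite Hf. specialize (H0 P HP). nra. }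
  destruct (completeness E) as [sm [Hub Hlub]].
  { exists 1. intros x [Hx _]. lra. }
  { exists 0; auto. }
  assert (Hsm0 : 0 <= sm) by (apply Hub; auto).
  assert (Hsm1 : sm <= 1) by (apply Hlub; intros x [Hx _]; lra).
  assert (HKs : Kp n gamma (lcv A0 A1 sm)).
  { intros P HP. rewrite Hf. specialize (H0 P HP). set (a0 := dot (S (S n)) P A0) in *. set (a1 := dot (S (S n)) P A1).
    destruct (Rle_or_lt a0 a1). nra.
    set (s0 := a0 / (a0 - a1)).
    assert (Hs0 : s0 * (a0 - a1) = a0) by (unfold s0; field; lra).
    assert (sm <= s0).
    { apply Hlub. intros x [Hx HKx]. specialize (HKx P HP). rewrite Hf in HKx. fold a0 a1 in HKx.
      apply Rnot_lt_le; intros Hc. assert (x * (a0 - a1) > s0 * (a0 - a1)) by nra. nra. }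
    nra. }
  exists sm. split; [split; auto|split; auto].
  { destruct Hsm1 as [Hsm1|Hsm1]; auto. exfalso. apply H1. intros P HP. specialize (HKs P HP).
    rewrite Hf, Hsm1 in HKs. lra. }
  intros eps He. apply NNPP. intros Hn.
  assert (Hge : forall X, tilde n (wulff n gamma) X -> eps <= dot (S (S n)) X (lcv A0 A1 sm)).
  { intros X HX. apply Rnot_lt_le. intros Hc. apply Hn. exists X; auto. }
  set (B := (1 + dot (S (S n)) A0 A0) / 2 + (1 + dot (S (S n)) A1 A1) / 2).
  assert (HB0 : 0 <= B) by (unfold B; pose proof (dot_self_nonneg (S (S n)) A0); pose proof (dot_self_nonneg (S (S n)) A1); lra).
  assert (Hsm1' : sm < 1).
  { destruct Hsm1 as [Hsm1|Hsm1]; auto. exfalso. apply H1. intros P HP. specialize (HKs P HP).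
    rewrite Hf, Hsm1 in HKs. lra. }
  set (d := Rmin (1 - sm) (eps / (B + 1))).
  assert (Hd1 : 0 < d) by (unfold d; apply Rmin_pos; [lra| apply Rdiv_lt_0_compat; lra]).
  assert (Hd2 : d <= 1 - sm) by (unfold d; apply Rmin_l).
  assert (Hd3 : d * (B + 1) <= eps).
  { assert (d <= eps / (B + 1)) by (unfold d; apply Rmin_r).
    apply (Rmult_le_compat_r (B + 1)) in H; [|lra]. unfold Rdiv in H. rewrite Rmult_assoc, Rinv_l in H; lra. }
  assert (E (sm + d)).
  { split; [lra|]. intros P HP. rewrite Hf.
    specialize (Hge P HP). rewrite Hf in Hge.
    assert (HPs : dot (S (S n)) P P = 1) by (apply tilde_char in HP; apply HP).
    pose proof (dot_cs (S (S n)) P A0). pose proof (dot_cs (S (S n)) P A1).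
    assert (Rabs (dot (S (S n)) P A0) + Rabs (dot (S (S n)) P A1) <= B) by (unfold B; lra).
    assert (Habs : - B <= dot (S (S n)) P A1 - dot (S (S n)) P A0).
    { pose proof (Rle_abs (dot (S (S n)) P A0)). pose proof (Rle_abs (- dot (S (S n)) P A1)) as Hm.
      rewrite Rabs_Ropp in Hm. lra. }
    assert (d * (dot (S (S n)) P A1 - dot (S (S n)) P A0) >= - d * B) by (apply Rle_ge; replace (- d * B) with (d * (- B)) by ring; apply Rmult_le_compat_l; lra).
    nra. }
  assert (sm + d <= sm) by (apply Hub; auto). lra.
Qed.

Lemma acos_zero_inv d : -1 <= d <= 1 -> acos d = PI / 2 -> d = 0.
Proof. intros Hd H. rewrite <- (cos_acos d Hd), H. apply cos_PI2. Qed.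

Lemma acos_le_half d : 0 <= d <= 1 -> acos d <= PI / 2.
Proof. intros Hd. apply Rnot_lt_le. intros H. pose proof (acos_bound d). pose proof PI_RGT_0.
  assert (cos (acos d) < 0) by (apply cos_lt_0; lra). rewrite cos_acos in H2; lra. Qed.

Lemma acos_gt_half d : -1 <= d < 0 -> PI / 2 < acos d.
Proof. intros Hd. apply Rnot_le_lt. intros H. pose proof (acos_bound d). pose proof PI_RGT_0.
  assert (0 <= cos (acos d)) by (apply cos_ge_0; lra). rewrite cos_acos in H2; lra. Qed.

Lemma dot_vopp_r k z x : dot k z (vopp x) = - dot k z x.
Proof. unfold vopp. rewrite <- (Rmult_1_l (dot k z x)), Ropp_mult_distr_l, <- dot_scal.
  apply dot_agree; intros; ring. Qed.

Lemma dot_vopp_l k z x : dot k (vopp x) z = - dot k x z.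
Proof. rewrite (dot_sym k (vopp x) z), dot_vopp_r, (dot_sym k z x); auto. Qed.

Lemma nz_of_dot k A B : dot k A B <> 0 -> 0 < dot k A A.
Proof. intros H. destruct (dot_self_nonneg k A) as [H0|H0]; auto. exfalso.
  set (q := Rabs (dot k A B)). assert (Hq : 0 < q) by (apply Rabs_pos_lt; auto).
  pose proof (dot_self_nonneg k B) as HB.
  set (t := (dot k B B + 1) / q).
  assert (Ht : 0 < t) by (unfold t; apply Rdiv_lt_0_compat; lra).
  pose proof (dot_wcs k A B t Ht). rewrite <- H0 in H1. fold q in H1.
  unfold t in H1. assert (dot k B B / ((dot k B B + 1) / q) = dot k B B * q / (dot k B B + 1)) by (field; lra).
  rewrite H2 in H1. assert (dot k B B * q / (dot k B B + 1) < q).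
  { apply (Rmult_lt_reg_r (dot k B B + 1)); [lra|]. unfold Rdiv. rewrite Rmult_assoc, Rinv_l by lra. nra. }
  lra. Qed.

Lemma dist_sq k a b e : 0 < e -> Defs.dist k a b < e ->
  dot k (fun i => 1 * a i + (-1) * b i) (fun i => 1 * a i + (-1) * b i) < e * e.
Proof. intros He H. unfold Defs.dist in H.
  replace (dot k (fun i => 1 * a i + (-1) * b i) (fun i => 1 * a i + (-1) * b i)) with
    (sumR k (fun i => (a i - b i) * (a i - b i))) by (unfold dot; apply sumR_ext; intros; ring).
  apply Rnot_le_lt. intros Hc. apply sqrt_le_1_alt in Hc. rewrite sqrt_square in Hc by lra. lra. Qed.

Theorem proposition3p1 (n : nat) (gamma : (nat -> R) -> R)
  (hpos : forall th, sphere (S n) th -> 0 < gamma th)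
  (hcont : continuous_on_sphere n gamma) :
  (forall Q, tilde n (wulff n gamma) Q <-> polar (S (S n)) (tilde n (wulff n gamma)) Q)
  <-> constant_width (S (S n)) (tilde n (wulff n gamma)) (PI / 2).
Proof.
  set (C := tilde n (wulff n gamma)).
  assert (Csph : forall X, C X -> sphere (S (S n)) X) by (intros X HX; apply tilde_char in HX; apply HX).
  split.
  - intros H P HPs [Hsub [Q0 [HQ0b HQ0h]]].
    assert (HPC : C P). { apply H. split; auto. intros R HR. rewrite dot_sym. apply (Hsub R HR). }
    assert (Hsupp_in : forall Q, sphere (S (S n)) Q -> (forall R, C R -> hemi (S (S n)) Q R) -> C Q).
    { intros Q HQs HQ. apply H. split; auto. intros R HR. rewrite dot_sym. apply HQ; auto. }
    destruct HQ0b as [HQ0s HQ0b]. destruct HQ0h as [_ HPQ0].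
    assert (HQ0C : C Q0).
    { apply H. split; auto. intros R HR. apply Rnot_lt_le. intros Hneg.
      set (e := - dot (S (S n)) R Q0).
      assert (He : 0 < e) by (unfold e; lra).
      destruct (HQ0b e He) as [[y [Hys [HyC Hyd]]] _].
      apply H in HyC. destruct HyC as [_ HyC]. specialize (HyC R HR).
      pose proof (dist_sq _ _ _ _ He Hyd) as Hd.
      pose proof (dot_wcs (S (S n)) R (fun i => 1 * Q0 i + (-1) * y i) e He) as Hw.
      rewrite dot_lc in Hw. rewrite (Csph R HR) in Hw.
      assert (dot (S (S n)) (fun i => 1 * Q0 i + -1 * y i) (fun i => 1 * Q0 i + -1 * y i) / e < e).
      { apply (Rmult_lt_reg_r e); auto. unfold Rdiv; rewrite Rmult_assoc, Rinv_l by lra. lra. }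
      pose proof (Rle_abs (- (1 * dot (S (S n)) R Q0 + -1 * dot (S (S n)) R y))) as Ha.
      rewrite Rabs_Ropp in Ha. unfold e in *. lra. }
    assert (HQ0K : forall R, C R -> 0 <= dot (S (S n)) R Q0) by (apply H in HQ0C; apply HQ0C).
    assert (HPK : forall R, C R -> 0 <= dot (S (S n)) R P) by (apply H in HPC; apply HPC).
    split.
    + exists Q0. split.
      * split; auto. split; [|split; [|split]].
        -- intros Hv. pose proof (dot_ext _ P _ _ Hv). unfold sphere in HPs. lra.
        -- intros Hv. pose proof (dot_ext _ Q0 _ _ Hv) as E1. rewrite dot_vopp_r, (dot_sym _ Q0 P) in E1.
           unfold sphere in HQ0s. lra.
        -- split.
           ++ intros R HR. split; auto. rewrite dot_sym; auto.
           ++ exists P. split.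
              ** split; auto. intros eps Heps. split.
                 --- exists P. split; auto. split; auto. rewrite dist_self; auto.
                 --- destruct (nearrot _ P Q0 HPs HQ0s HPQ0 eps Heps) as [z [Hz1 [Hz2 Hz3]]].
                     exists z. split; auto. split; auto. intros Hz. specialize (HQ0K z Hz).
                     rewrite dot_sym in HQ0K. lra.
              ** split; auto. rewrite dot_sym; auto.
        -- intros R HR. split; split; auto; rewrite dot_sym; auto.
      * unfold lune_thickness, sdist. rewrite HPQ0, acos_0. field.
    + intros Q [HQs [_ [_ [[HQsub _] _]]]].
      assert (HQC : C Q) by (apply Hsupp_in; auto).
      specialize (HPK Q HQC). rewrite dot_sym in HPK.
      pose proof (dot_unit_bound _ P Q HPs HQs).
      pose proof (acos_le_half (dot (S (S n)) P Q) ltac:(lra)).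
      unfold lune_thickness, sdist. lra.
  - intros HCW.
    pose proof (N_in n gamma hpos) as HN.
    assert (HKN : Kp n gamma (Nv n)).
    { intros P HP. rewrite dot_N. apply tilde_char in HP. lra. }
    assert (HN1 : Nv n (S n) = 1) by (unfold Nv; rewrite Nat.eqb_refl; auto).
    assert (Hsupp_K : forall Q, supports (S (S n)) C Q -> Kp n gamma Q).
    { intros Q [HQ _] R HR. rewrite dot_sym. apply HQ; auto. }
    intros Q. split.
    + intros HQ. split; [apply Csph; auto|]. fold (Kp n gamma Q).
      apply NNPP. intros HnK.
      destruct (Exit n gamma (Nv n) Q HKN HnK) as [s [Hs [HKV Hinf]]].
      set (V := lcv (Nv n) Q s) in *.
      assert (HVl : 0 < V (S n)).
      { unfold V, lcv. rewrite HN1. apply tilde_char in HQ. destruct HQ as [_ [HQl _]]. nra. }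
      pose proof (dot_last_pos n V HVl) as HVV.
      destruct (Supp n gamma V HVV HKV Hinf) as [HPs [HPK HPsup]].
      set (P := normz (S (S n)) V) in *.
      destruct (HCW P HPs HPsup) as [[Q' [[HQ's [_ [_ [HQ'sup _]]]] Hth]] _].
      unfold lune_thickness, sdist in Hth.
      pose proof (dot_unit_bound _ P Q' HPs HQ's).
      assert (Hz : dot (S (S n)) P Q' = 0) by (apply acos_zero_inv; lra).
      pose proof (Hsupp_K Q' HQ'sup) as HQ'K.
      pose proof (Pos n gamma Q' hpos hcont HQ's HQ'K) as HQ'l.
      pose proof (HQ'K Q HQ) as HQQ'.
      unfold P in Hz. rewrite normz_dot_l in Hz.
      assert (EV : dot (S (S n)) V Q' = (1 - s) * Q' (S n) + s * dot (S (S n)) Q Q').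
      { unfold V, lcv. rewrite (dot_sym _ _ Q'), dot_lc, dot_N, (dot_sym _ Q' Q). auto. }
      rewrite EV in Hz.
      pose proof (sqrt_pos_inv _ HVV).
      assert (0 < (1 - s) * Q' (S n) + s * dot (S (S n)) Q Q') by nra.
      assert (/ sqrt (dot (S (S n)) V V) * ((1 - s) * Q' (S n) + s * dot (S (S n)) Q Q') > 0) by (apply Rmult_lt_0_compat; auto).
      lra.
    + intros [HYs HYK]. fold (Kp n gamma Q) in HYK.
      pose proof (Pos n gamma Q hpos hcont HYs HYK) as HYl.
      apply NNPP. intros HnC.
      assert (Hth : exists th, sphere (S n) th /\ gamma th * Q (S n) < dot (S n) Q th).
      { apply NNPP. intros Hn. apply HnC. apply tilde_char. split; [|split]; auto.
        intros th Hth. apply Rnot_lt_le. intros Hc. apply Hn. exists th; auto. }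
      destruct Hth as [th [Hths Hth]].
      set (Z := rho n gamma th).
      assert (HYZ : dot (S (S n)) Q Z < 0) by (unfold Z; rewrite dot_rho; lra).
      assert (HKZ : Kp n gamma Z) by (apply rho_in_K; auto).
      assert (HnKY : ~ Kp n gamma (vopp Q)).
      { intros HK. assert (sphere (S (S n)) (vopp Q)).
        { unfold sphere. rewrite dot_vopp_l, dot_vopp_r. unfold sphere in HYs; lra. }
        pose proof (Pos n gamma _ hpos hcont H HK). unfold vopp in H0. lra. }
      assert (HnKZ : ~ Kp n gamma (vopp Z)).
      { intros HK. specialize (HK _ HN). rewrite dot_vopp_r in HK. unfold Z in HK.
        rewrite dot_rho, HN1 in HK. rewrite (dot_sym _ (Nv n) th), dot_Nv_r in HK by lia.
        specialize (hpos th Hths). lra. }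
      destruct (Exit n gamma Z (vopp Q) HKZ HnKY) as [a [Ha [HKA HinfA]]].
      destruct (Exit n gamma Q (vopp Z) HYK HnKZ) as [b [Hb [HKB HinfB]]].
      set (A := lcv Z (vopp Q) a) in *. set (B := lcv Q (vopp Z) b) in *.
      assert (HAB : dot (S (S n)) A B < 0).
      { unfold B, lcv. rewrite dot_lc, dot_vopp_r.
        rewrite (dot_sym _ A Q), (dot_sym _ A Z). unfold A, lcv. rewrite !dot_lc, !dot_vopp_r.
        rewrite (dot_sym _ Z Q). unfold sphere in HYs. rewrite HYs.
        pose proof (dot_self_nonneg (S (S n)) Z).
        assert (0 < (1 - a) * (1 - b)) by nra.
        assert ((1 - a) * (1 - b) * dot (S (S n)) Q Z < 0) by nra.
        assert (0 <= b * (1 - a) * dot (S (S n)) Z Z) by (apply Rmult_le_pos; nra).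
        assert (a * b * dot (S (S n)) Q Z <= 0) by (assert (0 <= a * b) by nra; nra).
        nra. }
      assert (HAA : 0 < dot (S (S n)) A A) by (apply (nz_of_dot _ A B); lra).
      assert (HBB : 0 < dot (S (S n)) B B) by (apply (nz_of_dot _ B A); rewrite dot_sym; lra).
      destruct (Supp n gamma A HAA HKA HinfA) as [HP1s [HP1K HP1sup]].
      destruct (Supp n gamma B HBB HKB HinfB) as [HP2s [HP2K HP2sup]].
      set (P1 := normz (S (S n)) A) in *. set (P2 := normz (S (S n)) B) in *.
      assert (H12 : dot (S (S n)) P1 P2 < 0).
      { unfold P1, P2. rewrite normz_dot_l, normz_dot_r.
        pose proof (sqrt_pos_inv _ HAA). pose proof (sqrt_pos_inv _ HBB).
        assert (0 < / sqrt (dot (S (S n)) A A) * / sqrt (dot (S (S n)) B B)) by nra.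
        nra. }
      destruct (HCW P1 HP1s HP1sup) as [_ Hmin].
      assert (Hl : width_lune (S (S n)) C P1 P2).
      { split; auto. split; [|split; [|split]]; auto.
        - intros Hv. pose proof (dot_ext _ P1 _ _ Hv). unfold sphere in HP1s. lra.
        - intros Hv. pose proof (Pos n gamma _ hpos hcont HP1s HP1K).
          pose proof (Pos n gamma _ hpos hcont HP2s HP2K).
          specialize (Hv (S n) ltac:(lia)). unfold vopp in Hv. lra.
        - intros R HR. destruct HP1sup as [Hs1 _]. destruct HP2sup as [Hs2 _]. split; auto. }
      specialize (Hmin P2 Hl). unfold lune_thickness, sdist in Hmin.
      pose proof (dot_unit_bound _ P1 P2 HP1s HP2s).
      pose proof (acos_gt_half (dot (S (S n)) P1 P2) ltac:(lra)). lra.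
Qed.
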